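(* Let $\Psi=(\psi_k)_{k\in\mathbb N}$ with $\psi_k\in(-\pi/2,\pi/2)$, and let $F_n=i\tan(\psi_{|n|})$ for $n\in\mathbb Z$. For $d\ge0$ let $G_d$ be the $SU(2)$ nonlinear Fourier series of the finitely supported sequence $(F_n\mathbf 1_{\{-d\le n\le d\}})_{n\in\mathbb Z}$. For $x\in[0,1]$ let $\theta$ be the unique number in $[0,\pi/2]$ with $\cos\theta=x$ and set $z=e^{2i\theta}$. Then for every $d\ge0$, $$M\,U_d(\Psi,x)\,M=\begin{pmatrix}e^{id\theta}&0\\0&e^{-id\theta}\end{pmatrix}G_d(z)\begin{pmatrix}e^{id\theta}&0\\0&e^{-id\theta}\end{pmatrix}.$$
   Context: $W(x)=\begin{pmatrix}x& i\sqrt{1-x^2}\\ i\sqrt{1-x^2}& x\end{pmatrix}$, $Z=\begin{pmatrix}1&0\\0&-1\end{pmatrix}$, $M=2^{-1/2}\begin{pmatrix}1&1\\1&-1\end{pmatrix}$. $U_0(\Psi,x)=e^{i\psi_0Z}$ and $U_d(\Psi,x)=e^{i\psi_dZ}W(x)U_{d-1}(\Psi,x)W(x)e^{i\psi_dZ}$ for $d\ge1$. For a finitely supported sequence $F:\mathbb Z\to\mathbb C$, its $SU(2)$ nonlinear Fourier series is the matrix-valued function $G(z)=\prod_{k}(1+|F_k|^2)^{-1/2}\begin{pmatrix}1&F_kz^k\\-\overline{F_k}z^{-k}&1\end{pmatrix}$, where the (finite) product is ordered with $k$ increasing from left to right. *)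

(* Defs.v *)
From HB Require Import structures.
From mathcomp Require Import all_boot all_order all_algebra.
From mathcomp Require Import all_classical all_reals all_analysis.
From mathcomp Require Import complex.
Set Implicit Arguments. Unset Strict Implicit. Unset Printing Implicit Defensive.
Import Order.TTheory GRing.Theory Num.Theory.
Local Open Scope ring_scope.
Local Open Scope complex_scope.

Section QSP.
Variable R : realType.

Definition expi (t : R) : R[i] := (cos t +i* sin t).

Definition expZ (t : R) : 'M[R[i]]_2 :=
  \matrix_(r < 2, c < 2)
    if r == c then (if r == 0 then expi t else expi (- t)) else 0.

Definition Wmx (x : R) : 'M[R[i]]_2 :=
  \matrix_(r < 2, c < 2)
    if r == c then x%:C else (0 +i* 1) * (Num.sqrt (1 - x ^+ 2))%:C.

Definition Mmx : 'M[R[i]]_2 :=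
  \matrix_(r < 2, c < 2)
    (((Num.sqrt 2)^-1)%:C * (if (r == 1) && (c == 1) then -1 else 1)).

Fixpoint Uqsp (Psi : nat -> R) (x : R) (d : nat) : 'M[R[i]]_2 :=
  match d with
  | 0 => expZ (Psi 0%N)
  | d'.+1 => expZ (Psi d) *m Wmx x *m Uqsp Psi x d' *m Wmx x *m expZ (Psi d)
  end.

Definition nlft_factor (Fk z : R[i]) (k : int) : 'M[R[i]]_2 :=
  ((Num.sqrt (1 + Normc.normc Fk ^+ 2))^-1)%:C *:
  \matrix_(r < 2, c < 2)
    if r == c then 1
    else if r == 0 then Fk * z ^ k else - (conjc Fk) * z ^ (- k).

(* SU(2) nonlinear Fourier series at z of a sequence F supported in
   [lo, lo + n - 1]: ordered product, k increasing from left to right. *)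
Definition nlft (F : int -> R[i]) (lo : int) (n : nat) (z : R[i]) : 'M[R[i]]_2 :=
  \prod_(i < n) nlft_factor (F (lo + i%:Z)%R) z (lo + i%:Z)%R.

End QSP.

(* Main.v *)
Require Import Defs.
From HB Require Import structures.
From mathcomp Require Import all_boot all_order all_algebra.
From mathcomp Require Import all_classical all_reals all_analysis.
From mathcomp Require Import complex.
From mathcomp Require Import ring lra zify.
Import Order.TTheory GRing.Theory Num.Theory.
Local Open Scope ring_scope.
Local Open Scope complex_scope.

Section Aux.
Variable R : realType.
Local Notation C := (R[i]).
Local Notation I := (0 +i* 1 : R[i]).

Definition mk2 (a b c d : C) : 'M[C]_2 :=
  \matrix_(r < 2, s < 2) if r == 0 then (if s == 0 then a else b)
                         else (if s == 0 then c else d).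

Lemma mx2E (A : 'M[C]_2) : A = mk2 (A 0 0) (A 0 1) (A 1 0) (A 1 1).
Proof.
apply/matrixP => i j; rewrite mxE.
by case: i => [[|[|//]] ?]; case: j => [[|[|//]] ?] /=; congr (A _ _); apply: val_inj.
Qed.

Lemma mk2_mul a b c d a' b' c' d' :
  mk2 a b c d *m mk2 a' b' c' d' =
  mk2 (a * a' + b * c') (a * b' + b * d') (c * a' + d * c') (c * b' + d * d').
Proof.
apply/matrixP => i j; rewrite !mxE !big_ord_recl big_ord0 addr0 !mxE /=.
by case: i => [[|[|//]] ?]; case: j => [[|[|//]] ?].
Qed.

Lemma cmul a b c d : (a +i* b) * (c +i* d) = (a * c - b * d) +i* (a * d + b * c) :> C.
Proof. by []. Qed.
Lemma cadd a b c d : (a +i* b) + (c +i* d) = (a + c) +i* (b + d) :> C.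
Proof. by []. Qed.
Lemma copp a b : - (a +i* b) = (- a) +i* (- b) :> C.
Proof. by []. Qed.
Lemma creal a : a%:C = a +i* 0 :> C.
Proof. by []. Qed.
Lemma c0 : 0 = 0 +i* 0 :> C. Proof. by []. Qed.
Lemma c1 : 1 = 1 +i* 0 :> C. Proof. by []. Qed.

Lemma expiD (a b : R) : expi a * expi b = expi (a + b).
Proof. rewrite /expi cmul cosD sinD; congr (_ +i* _); ring. Qed.
Lemma expi0 : expi (0:R) = 1.
Proof. by rewrite /expi cos0 sin0. Qed.
Lemma expiV (t : R) : (expi t)^-1 = expi (- t).
Proof.
have h : expi t * expi (- t) = 1 by rewrite expiD subrr expi0.
have nz : expi t != 0 by apply/eqP => e; move: h; rewrite e mul0r => /eqP; rewrite eq_sym oner_eq0.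
by apply: (mulfI nz); rewrite h mulfV.
Qed.
Lemma expiX (t : R) n : expi t ^+ n = expi (n%:R * t).
Proof.
elim: n => [|n IH]; first by rewrite expr0 mul0r expi0.
by rewrite exprS IH expiD mulrSr mulrDl mul1r addrC.
Qed.

Lemma expZE (t : R) : expZ t = mk2 (expi t) 0 0 (expi (- t)).
Proof. by rewrite [LHS]mx2E !mxE. Qed.

Lemma expZD (a b : R) : expZ a *m expZ b = expZ (a + b).
Proof.
rewrite !expZE mk2_mul !mul0r !mulr0 !addr0 !add0r !expiD opprD.
by [].
Qed.
Lemma expZ0 : expZ (0:R) = 1%:M.
Proof.
rewrite expZE oppr0 expi0 [RHS]mx2E !mxE //.
Qed.


Ltac cnorm := rewrite /expi ?creal ?c0 ?c1; rewrite ?(cmul, cadd, copp).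

Definition hh : C := ((2 : R)^-1)%:C.
Definition mm : C := ((Num.sqrt (2 : R))^-1)%:C.

Lemma mmE : mm * mm = hh.
Proof.
rewrite /mm /hh -rmorphM /=; congr (_ %:C).
rewrite -invrM ?unitfE ?sqrtr_eq0 -?ltNge ?ltr0n // -expr2 sqr_sqrtr //.
Qed.

Lemma Mmx_mk2 : Mmx R = mk2 mm mm mm (- mm).
Proof. by rewrite [LHS]mx2E !mxE /= mulr1 mulrN1. Qed.

Lemma Mconj a b c d : Mmx R *m mk2 a b c d *m Mmx R =
  mk2 (hh*(a+b+c+d)) (hh*(a-b+c-d)) (hh*(a+b-c-d)) (hh*(a-b-c+d)).
Proof. by rewrite Mmx_mk2 !mk2_mul -mmE; congr mk2; ring. Qed.

Lemma one_mk2 : 1%:M = mk2 1 0 0 1 :> 'M[C]_2.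
Proof. by rewrite [LHS]mx2E !mxE. Qed.

Lemma MM : Mmx R *m Mmx R = 1%:M.
Proof.
rewrite -[X in X *m _]mulmx1 one_mk2 Mconj.
rewrite /hh; congr mk2; cnorm; congr (_ +i* _); by field.
Qed.

Definition Pm (p : R) : 'M[C]_2 :=
  mk2 (cos p)%:C (I * (sin p)%:C) (I * (sin p)%:C) (cos p)%:C.

Lemma MEM p : Mmx R *m expZ p *m Mmx R = Pm p.
Proof.
rewrite expZE Mconj /Pm /hh; congr mk2; cnorm; rewrite ?cosN ?sinN;
  congr (_ +i* _); by field.
Qed.


Lemma Wmx_mk2 (x : R) : Wmx x = mk2 x%:C (I * (Num.sqrt (1 - x ^+ 2))%:C)
  (I * (Num.sqrt (1 - x ^+ 2))%:C) x%:C.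
Proof. by rewrite [LHS]mx2E !mxE. Qed.

Lemma MWM (x theta : R) : 0 <= theta <= pi / 2 -> cos theta = x ->
  Mmx R *m Wmx x *m Mmx R = expZ theta.
Proof.
move=> /andP[h0 h1] hc.
have hs : Num.sqrt (1 - x ^+ 2) = sin theta.
  rewrite -hc -sin2cos2 sqrtr_sqr ger0_norm //; apply: sin_ge0_pi.
  rewrite h0 /=; apply: (le_trans h1); have := pi_ge0 R; lra.
rewrite Wmx_mk2 hs Mconj expZE /hh -hc; congr mk2; cnorm; rewrite ?cosN ?sinN;
  congr (_ +i* _); by field.
Qed.

Lemma factor_mk2 (Fk z : C) (k : int) : nlft_factor Fk z k =
  mk2 ((Num.sqrt (1 + Normc.normc Fk ^+ 2))^-1)%:C
      ((Num.sqrt (1 + Normc.normc Fk ^+ 2))^-1%:C * (Fk * z ^ k))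
      ((Num.sqrt (1 + Normc.normc Fk ^+ 2))^-1%:C * (- conjc Fk * z ^ (- k)))
      ((Num.sqrt (1 + Normc.normc Fk ^+ 2))^-1)%:C.
Proof. by rewrite [LHS]mx2E !mxE /= mulr1. Qed.

Lemma normF (t : R) : Normc.normc (I * t%:C) ^+ 2 = t ^+ 2.
Proof.
rewrite cmul /= sqr_sqrtr; first by ring.
by rewrite addr_ge0 // sqr_ge0.
Qed.

Lemma cfac (p : R) : 0 < cos p ->
  (Num.sqrt (1 + Normc.normc (I * (tan p)%:C) ^+ 2))^-1 = cos p.
Proof.
move=> hp; have hp0 : cos p != 0 by rewrite gt_eqF.
by rewrite normF -cos2_tan2 // -exprVn sqrtr_sqr ger0_norm ?invrK // invr_ge0 ltW.
Qed.

Lemma cF (p : R) : 0 < cos p -> (cos p)%:C * (I * (tan p)%:C) = I * (sin p)%:C.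
Proof.
move=> hp; have hp0 : cos p != 0 by rewrite gt_eqF.
cnorm; rewrite /tan; congr (_ +i* _); by field.
Qed.

Lemma conjF (t : R) : - conjc (I * t%:C) = I * t%:C.
Proof. cnorm; rewrite /conjc; cnorm; congr (_ +i* _); ring. Qed.

Lemma factor_gen (p t : R) (z : C) (k : int) : 0 < cos p ->
  z ^ k = expi (t + t) -> z ^ (- k) = expi (- t + - t) ->
  nlft_factor (I * (tan p)%:C) z k = expZ t *m Pm p *m expZ (- t).
Proof.
move=> hp hw hw'.
rewrite factor_mk2 cfac // !expZE !mk2_mul /Pm opprK hw hw' -!expiD;
  rewrite !mul0r !mulr0 !addr0 !add0r; congr mk2.
- by rewrite mulrAC expiD subrr expi0 mul1r.
- by rewrite -(cF p hp); ring.
- by rewrite conjF -(cF p hp); ring.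
- by rewrite mulrAC expiD addNr expi0 mul1r.
Qed.


Lemma expiz (a : R) (k : int) : expi a ^ k = expi (k%:~R * a).
Proof.
case: k => n; first by rewrite -exprnP expiX.
by rewrite NegzE -exprnN expiX expiV mulrNz mulNr.
Qed.

Lemma mulmxMM (X : 'M[C]_2) : X *m Mmx R *m Mmx R = X.
Proof. by rewrite -mulmxA MM mulmx1. Qed.

Lemma Mins (A B D E G : 'M[C]_2) :
  Mmx R *m (A *m B *m D *m E *m G) *m Mmx R =
  (Mmx R *m A *m Mmx R) *m (Mmx R *m B *m Mmx R) *m (Mmx R *m D *m Mmx R)
  *m (Mmx R *m E *m Mmx R) *m (Mmx R *m G *m Mmx R).
Proof. by rewrite !mulmxA !mulmxMM. Qed.

End Aux.
Arguments Pm {R}.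

Theorem lemma4p1 (R : realType) (Psi : nat -> R)
    (hPsi : forall k : nat, - (pi / 2) < Psi k < pi / 2)
    (x theta : R) (hx : 0 <= x <= 1)
    (htheta : 0 <= theta <= pi / 2) (hcos : cos theta = x) (d : nat) :
  let F : int -> R[i] := fun n => (0 +i* 1) * (tan (Psi `|n|%N))%:C in
  let Fd : int -> R[i] :=
    fun n => if (- (d%:Z) <= n) && (n <= d%:Z) then F n else 0 in
  let z : R[i] := expi (2 * theta) in
  Mmx R *m Uqsp Psi x d *m Mmx R =
  expZ (d%:R * theta) *m nlft Fd (- (d%:Z)) (d.*2.+1) z *m expZ (d%:R * theta).
Proof.
move=> F Fd z.
have hP k : 0 < cos (Psi k) by apply: cos_gt0_pihalf.
pose g := fun k : int => nlft_factor (F k) z k.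
have gE k : g k = expZ (k%:~R * theta) *m Pm (Psi `|k|%N) *m expZ (- (k%:~R * theta)).
  apply: factor_gen => //; rewrite /z expiz; congr expi; rewrite ?mulrNz; ring.
have -> : nlft Fd (- (d%:Z)) (d.*2.+1) z = \prod_(i < d.*2.+1) g (- (d%:Z) + i%:Z).
  rewrite /nlft; apply: eq_bigr => i _; rewrite /Fd /g ifT //.
  have hi := ltn_ord i; apply/andP; split; lia.
elim: d {Fd} => [|n IH].
  rewrite big_ord1 gE /= mul0r oppr0 expZ0 mul1mx mulmx1 MEM.
  by rewrite mul1mx mulmx1.
have prodS : \prod_(i < n.+1.*2.+1) g (- (n.+1%:Z) + i%:Z) =
    g (- (n.+1%:Z)) * \prod_(i < n.*2.+1) g (- (n%:Z) + i%:Z) * g (n.+1%:Z).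
  rewrite doubleS big_ord_recl big_ord_recr /= mulrA addr0.
  congr (_ * _ * g _); last by rewrite /bump /=; lia.
  apply: eq_bigr => i _; congr g; rewrite /bump /=; lia.
rewrite prodS -!mulmxE !gE !mulrNz !mulNr opprK (abszN (n.+1%:Z)) /=.
rewrite Mins !MEM !(@MWM R x theta htheta hcos) IH -!mulmxE.
set a := n.+1%:R * theta.
have ha1 : theta + n%:R * theta = a by rewrite /a mulrSr mulrDl mul1r addrC.
have ha2 : n%:R * theta + theta = a by rewrite /a mulrSr mulrDl mul1r.
rewrite !mulmxA expZD subrr expZ0 mul1mx.
rewrite -[RHS]mulmxA expZD addNr expZ0 mulmx1.
rewrite -(mulmxA (Pm _) (expZ theta)) expZD ha1.
by rewrite -(mulmxA _ (expZ (n%:R * theta)) (expZ theta)) expZD ha2.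
Qed.
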